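(* For $n\ge3$ the Hilbert series of $K^{\infty}_n$ is $$\mathcal{H}^{[n]}_K(t)=\sum_{k\ge0}c^{[n]}_kt^k=\frac{1}{t^n\,\mathcal{K}_n(1/t)}.$$
   Context: $K^{\infty}_n=\langle y_1,\dots,y_n\mid y_iy_j=y_jy_i\ (j+2\le i\le n-1),\ y_ny_k=y_ky_n\ (1\le k\le n-3)\rangle$, and $c^{[n]}_k$ is the number of its elements of length $k$. $\mathcal{K}_n(\lambda)=\det(\lambda I_n-M_n)$ where $M_n$ is the $n\times n$ matrix with $(M_n)_{j,i}=1$ if $i\ge j-1$ or $(j,i)=(n,n-2)$, and $0$ otherwise. *)

(* Defs.v *)
From HB Require Import structures.
From mathcomp Require Import all_boot all_order all_algebra all_fingroup.
Set Implicit Arguments. Unset Strict Implicit. Unset Printing Implicit Defensive.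
Import GRing.Theory.

(* Letters y_1..y_n are encoded as a : 'I_n with y_{a+1}.  The predicate
   [comm1 n i j] (1-based indices i j) encodes the defining relations
   y_i y_j = y_j y_i for j+2 <= i <= n-1 and y_n y_k = y_k y_n for 1<=k<=n-3. *)
Definition comm1 (n i j : nat) : bool :=
  ((j.+2 <= i) && (i <= n - 1) && (1 <= j))
  || ((i == n) && (1 <= j) && (j <= n - 3)).

Definition commb (n : nat) (a b : 'I_n) : bool :=
  comm1 n a.+1 b.+1 || comm1 n b.+1 a.+1.

Definition step (n k : nat) (u v : k.-tuple 'I_n) : bool :=
  [exists i : 'I_k, exists j : 'I_k,
     [&& (j == i.+1 :> nat), commb (tnth u i) (tnth u j)
       & [forall l : 'I_k, tnth v l == tnth u (tperm i j l)]]].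

(* the elements of length k of K^oo_n: congruence classes of words of length k *)
Definition Kclasses (n k : nat) : {set {set k.-tuple 'I_n}} :=
  [set [set v | connect (@step n k) u v] | u : k.-tuple 'I_n].

Definition c (n k : nat) : nat := #|Kclasses n k|.

Definition Mn (n : nat) : 'M[int]_n :=
  \matrix_(j < n, i < n)
    (if (j.+1 - 1 <= i.+1) || ((j.+1 == n) && (i.+1 == n - 2)) then 1%R else 0%R).

Definition Kpoly (n : nat) : {poly int} := char_poly (Mn n).

(* the polynomial t^n K_n(1/t) (reciprocal polynomial of degree n) *)
Definition Krev (n : nat) : {poly int} :=
  \poly_(i < n.+1) ((Kpoly n)`_(n - i))%R.

(* Main.v *)
Require Import Defs.
From mathcomp Require Import all_boot all_order all_algebra all_fingroup zify ring.
Set Implicit Arguments. Unset Strict Implicit.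

Definition tr (n : nat) (j i : 'I_n) : bool :=
  (j.+1 - 1 <= i.+1) || ((j.+1 == n) && (i.+1 == n - 2)).

Lemma commbC n (a b : 'I_n) : commb a b = commb b a.
Proof. by rewrite /commb orbC. Qed.

Lemma commb_irr n (a : 'I_n) : commb a a = false.
Proof. rewrite /commb /comm1; have := ltn_ord a; lia. Qed.

Lemma F3 n (a b : 'I_n) : b < a -> commb b a -> b.+2 <= a.
Proof. rewrite /commb /comm1; have := ltn_ord a; have := ltn_ord b; lia. Qed.

Lemma F4 n (b x y : 'I_n) : b.+2 <= x -> commb b x -> tr x y -> b < y.
Proof. rewrite /tr /commb /comm1; have := ltn_ord x; have := ltn_ord y; have := ltn_ord b; lia. Qed.

Lemma F5 n (a b : 'I_n) : ~~ tr a b -> commb a b && (b < a).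
Proof. rewrite /tr /commb /comm1; have := ltn_ord a; have := ltn_ord b; lia. Qed.

Section Comb.
Variable n : nat.
Notation W := (seq 'I_n).

Fixpoint avail (b : 'I_n) (w : W) : bool :=
  if w is x :: s then (x == b) || (commb b x && avail b s) else false.

Definition sw (u v : W) : Prop :=
  exists s1 x y s2, [/\ commb x y, u = s1 ++ x :: y :: s2 & v = s1 ++ y :: x :: s2].

Inductive rts : W -> W -> Prop :=
| rts_refl u : rts u u
| rts_step u v w : sw u v -> rts v w -> rts u w.

Lemma rts_trans u v w : rts u v -> rts v w -> rts u w.
Proof. by elim=> // u1 v1 w1 h _ IH /IH; apply: rts_step. Qed.

Lemma sw_cons a u v : sw u v -> sw (a :: u) (a :: v).
Proof. by case=> s1 [x [y [s2 [h -> ->]]]]; exists (a :: s1), x, y, s2. Qed.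

Lemma rts_cons a u v : rts u v -> rts (a :: u) (a :: v).
Proof. elim=> [u1|u1 v1 w1 h _ IH]; first exact: rts_refl.
by apply: rts_step IH; apply: sw_cons. Qed.

Lemma sw_sym u v : sw u v -> sw v u.
Proof. by case=> s1 [x [y [s2 [h -> ->]]]]; exists s1, y, x, s2; rewrite commbC. Qed.

Lemma sw_size u v : sw u v -> size u = size v.
Proof. by case=> s1 [x [y [s2 [h -> ->]]]]; rewrite !size_cat. Qed.

Lemma avail_in b w : avail b w -> b \in w.
Proof.
elim: w => //= x s IH /orP [/eqP ->|/andP [_ /IH]]; first by rewrite mem_head.
by rewrite in_cons => ->; rewrite orbT.
Qed.

Lemma avail_sw z u v : sw u v -> avail z u = avail z v.
Proof.
case=> s1 [x [y [s2 [h -> ->]]]]; elim: s1 => [|w s1 IH] /=; last by rewrite IH.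
case: (eqVneq x z) => [exz|hxz]; case: (eqVneq y z) => [eyz|hyz] /=.
- by subst; rewrite commb_irr in h.
- by subst; rewrite h.
- by subst; rewrite commbC h.
by rewrite andbCA.
Qed.

Lemma rem_sw a u v : sw u v -> rem a u = rem a v \/ sw (rem a u) (rem a v).
Proof.
case=> s1 [x [y [s2 [h -> ->]]]]; elim: s1 => [|w s1 IH] /=; last first.
  case: ifP => _; first by right; exists s1, x, y, s2.
  by case: IH => [->|]; [left | right; apply: sw_cons].
case: (eqVneq x a) => [exa|hxa]; case: (eqVneq y a) => [eya|hya] /=.
- by rewrite exa eya commb_irr in h.
- by left.
- by left.
by right; exists [::], x, y, (rem a s2).
Qed.

Lemma avail_rts a u : avail a u -> rts u (a :: rem a u).
Proof.
elim: u => //= x s IH /orP [/eqP ->|/andP [hc /IH hs]]; first by rewrite eqxx; apply: rts_refl.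
have hxa : x != a by apply: contraTneq hc => ->; rewrite commb_irr.
rewrite (negbTE hxa); apply: rts_trans (rts_cons x hs) _.
apply: rts_step (rts_refl _); exists [::], x, a, (rem a s); split=> //.
by rewrite commbC.
Qed.

Definition minav (w : W) : option 'I_n :=
  [pick a | avail a w && [forall b, avail b w ==> (a <= b)]].

Lemma minav_sw u v : sw u v -> minav u = minav v.
Proof.
move=> h; apply: eq_pick => a /=; rewrite (avail_sw a h); congr (_ && _).
by apply: eq_forallb => b; rewrite (avail_sw b h).
Qed.

Lemma minavP w : w != [::] -> exists a, minav w = Some a /\
  (avail a w /\ forall b, avail b w -> a <= b).
Proof.
case: w => // x s _.
have hx : avail x (x :: s) by rewrite /= eqxx.
case: (@arg_minnP _ x (fun a => avail a (x :: s)) (fun a : 'I_n => val a) hx) => a ha hmin.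
rewrite /minav; case: pickP => [a' /andP [h1 /forallP h2]|].
  by exists a'; split=> // ; split=> // b hb; have := h2 b; rewrite hb.
move/(_ a); rewrite ha /=; case/negP; apply/forallP => b; apply/implyP; exact: hmin.
Qed.

Lemma minav_nil : minav [::] = None.
Proof. by rewrite /minav; case: pickP. Qed.

Fixpoint nfk (k : nat) (w : W) : W :=
  if k is k'.+1 then (if minav w is Some a then a :: nfk k' (rem a w) else w) else w.

Definition nf (w : W) := nfk (size w) w.

Lemma size_rem_avail a w : avail a w -> size (rem a w) = (size w).-1.
Proof. by move/avail_in => h; rewrite size_rem. Qed.

Lemma nfE w a : minav w = Some a -> nf w = a :: nf (rem a w).
Proof.
move=> h; have : avail a w.
  by move: h; rewrite /minav; case: pickP => // a' /andP [h1 _] [<-].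
move=> ha; rewrite /nf size_rem_avail //.
case: w h ha => [|x s] /= h ha; first by rewrite minav_nil in h.
by rewrite h.
Qed.

Lemma nf_nil : nf [::] = [::].
Proof. by []. Qed.

Lemma nf_sw u v : sw u v -> nf u = nf v.
Proof.
move: {2}(size u) (leqnn (size u)) => k; elim: k u v => [|k IH] u v.
  by case: u => // _ [s1 [x [y [s2 [_ h _]]]]]; case: s1 h.
move=> hs h.
have hne : u != [::] by case: h => s1 [x [y [s2 [_ -> _]]]]; case: s1.
have [a [hu [ha hmin]]] := minavP hne.
have hv : minav v = Some a by rewrite -(minav_sw h).
rewrite (nfE hu) (nfE hv); congr (_ :: _).
have hsz : size (rem a u) <= k.
  by rewrite size_rem_avail //; move: hs hne; case: (size u) (size_eq0 u) => [/eqP|].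
by case: (rem_sw a h) => [->|h2] //; apply: IH h2.
Qed.

Lemma rts_nf u v : rts u v -> nf u = nf v.
Proof. by elim=> // u1 v1 w1 h _ <-; apply: nf_sw. Qed.

Lemma nf_rts w : rts w (nf w).
Proof.
move: {2}(size w) (leqnn (size w)) => k; elim: k w => [|k IH] w.
  by case: w => // _; apply: rts_refl.
case: w => [|x s]; first by move=> _; apply: rts_refl.
move=> hs; have [a [hu [ha hmin]]] := minavP (isT : x :: s != [::]).
rewrite (nfE hu); apply: rts_trans (avail_rts ha) _; apply: rts_cons; apply: IH.
by rewrite size_rem_avail.
Qed.

Definition goodw (w : W) : bool := if w is a :: s then path (@tr n) a s else true.

Lemma avail_rem a b w : avail b (rem a w) -> commb b a -> avail b w.
Proof.
elim: w => //= x s IH; case: ifP => [/eqP -> hs hc|_ /= /orP [->//|/andP [h1 /IH h2] hc]].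
  by rewrite hc hs orbT.
by rewrite h1 h2 // orbT.
Qed.

Lemma good_nf w : goodw (nf w).
Proof.
move: {2}(size w) (leqnn (size w)) => k; elim: k w => [|k IH] w.
  by case: w.
case: w => [|x s] // hs; have [a [hu [ha hmin]]] := minavP (isT : x :: s != [::]).
rewrite (nfE hu); change (path (@tr n) a (nf (rem a (x :: s)))).
have hr : size (rem a (x :: s)) <= k by rewrite size_rem_avail.
have := IH _ hr.
case E : (rem a (x :: s)) => [|y t]; first by rewrite nf_nil.
have [b [hb [hba _]]] := minavP (isT : y :: t != [::]).
rewrite (nfE hb) /= => hp; rewrite hp andbT.
apply/negPn/negP => /F5 /andP [hc hlt].
have : avail b (x :: s) by apply: (@avail_rem a); rewrite ?E // commbC.
by move/hmin; rewrite leqNgt hlt.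
Qed.


Lemma Lchain (b : 'I_n) s : forall x, path (@tr n) x s -> b.+2 <= x -> commb b x ->
  avail b s -> False.
Proof.
elim: s => //= y s IH x /andP [hxy hp] hbx hc.
have hby := F4 hbx hc hxy.
case/orP => [/eqP eyb|/andP [hcy]]; first by rewrite eyb ltnn in hby.
by apply: IH hp (F3 hby hcy) hcy.
Qed.

Lemma good_min a s b : path (@tr n) a s -> avail b (a :: s) -> a <= b.
Proof.
move=> hp /= /orP [/eqP -> //|/andP [hc hs]].
rewrite leqNgt; apply/negP => hlt.
exact: (Lchain hp (F3 hlt hc) hc hs).
Qed.

Lemma good_fix w : goodw w -> nf w = w.
Proof.
elim: w => // a s IH hg.
have [a' [hu [ha hmin]]] := minavP (isT : a :: s != [::]).
have ea : a' = a.
  apply/val_inj/eqP; rewrite eqn_leq hmin /= ?eqxx //.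
  exact: (good_min hg ha).
rewrite (nfE hu) ea /= eqxx IH //.
by case: s hg {IH hu ha hmin} => //= x s /andP [].
Qed.
End Comb.

Lemma nth_swap (T : Type) (d : T) s1 x y s2 l :
  nth d (s1 ++ y :: x :: s2) l = nth d (s1 ++ x :: y :: s2)
    (if l == size s1 then (size s1).+1 else if l == (size s1).+1 then size s1 else l).
Proof.
rewrite !nth_cat; case: (ltngtP l (size s1)) => h.
- have -> : (l == (size s1).+1) = false by lia.
  by rewrite h.
- case: eqP => [->|hne].
    by rewrite ltnn subnn subSn // subnn.
  rewrite ltnNge (ltnW h) /=.
  have -> : (l - size s1 = (l - size s1 - 2).+2)%N by lia.
  by [].
- by rewrite h subnn ltnNge leqnSn /= subSn // subnn.
Qed.

Lemma split2 (T : Type) (d : T) (s : seq T) i : i.+1 < size s ->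
  s = take i s ++ nth d s i :: nth d s i.+1 :: drop i.+2 s.
Proof.
move=> h; rewrite -{1}(cat_take_drop i s) (drop_nth d); last by lia.
by rewrite (drop_nth d).
Qed.

Lemma step_sw n k (u v : k.-tuple 'I_n) : step u v <-> sw u v.
Proof.
split.
  case/existsP => i /existsP [j /and3P [/eqP hj hc /forallP hv]].
  have hik : i.+1 < size u by rewrite size_tuple -hj ltn_ord.
  have hu := split2 (tnth u i) hik.
  have e1 : nth (tnth u i) u i = tnth u i by rewrite -tnth_nth.
  have e2 : nth (tnth u i) u i.+1 = tnth u j by rewrite -hj -tnth_nth.
  rewrite e1 e2 in hu.
  exists (take i u), (tnth u i), (tnth u j), (drop i.+2 u); split=> //.
  apply: (@eq_from_nth _ (tnth u i)).
    have hik' : i.+1 < k by move: hik; rewrite size_tuple.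
    rewrite size_tuple size_cat /= size_take size_drop size_tuple (ltnW hik').
    by rewrite !addnS -!addSn subnKC.
  move=> l; rewrite size_tuple => hl.
  have sz : size (take i u) = i by rewrite size_take size_tuple ltn_ord.
  rewrite nth_swap -hu sz.
  set d := tnth u i.
  have := hv (Ordinal hl); rewrite !(tnth_nth d) => /eqP ->.
  case: tpermP => [eL|eL|nL1 nL2].
  - have -> : l = i by move/(congr1 val): eL.
    by rewrite eqxx hj.
  - have -> : l = i.+1 by rewrite -hj; move/(congr1 val): eL.
    by rewrite (gtn_eqF (ltnSn i)) eqxx.
  - have h1 : (l == i) = false by apply/eqP => h; apply: nL1; apply: val_inj; exact h.
    have h2 : (l == i.+1) = false.
      by apply/eqP => h; apply: nL2; apply: val_inj; exact: (etrans h (esym hj)).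
    by rewrite h1 h2.
case=> s1 [x [y [s2 [hc hu hv]]]].
have hk : (size s1).+1 < k by rewrite -(size_tuple u) hu size_cat /=; lia.
pose i := Ordinal (ltnW hk); pose j := Ordinal hk.
apply/existsP; exists i; apply/existsP; exists j; apply/and3P; split => //.
  by rewrite !(tnth_nth x) hu /= !nth_cat ltnn subnn ltnNge leqnSn /= subSn // subnn.
apply/forallP => l; rewrite !(tnth_nth x) hv nth_swap -hu.
case: tpermP => [eL|eL|nL1 nL2].
- by rewrite eL /= eqxx.
- by rewrite eL /= (gtn_eqF (ltnSn _)) eqxx.
- have h1 : (val l == size s1) = false by apply/eqP => h; apply: nL1; apply: val_inj.
  have h2 : (val l == (size s1).+1) = false by apply/eqP => h; apply: nL2; apply: val_inj.
  by rewrite h1 h2.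
Qed.

Lemma rts_lift n k (s t : seq 'I_n) : rts s t ->
  forall u : k.-tuple 'I_n, val u = s -> exists v : k.-tuple 'I_n, val v = t /\ connect (@step n k) u v.
Proof.
elim=> [s1|s1 s2 s3 h _ IH] u hu.
  by exists u; split.
have hs : size s2 == k by rewrite -(sw_size h) -hu size_tuple.
have [v [hv hc]] := IH (Tuple hs) erefl.
exists v; split=> //; apply: connect_trans hc; apply: connect1.
by apply/step_sw; rewrite hu.
Qed.

Lemma connect_nf n k (u v : k.-tuple 'I_n) : connect (@step n k) u v -> nf u = nf v.
Proof.
case/connectP => p; elim: p u => [|w p IH] u /=; first by move=> _ ->.
case/andP => /step_sw h hp hv; rewrite (nf_sw h); exact: IH.
Qed.

Lemma step_sym n k : symmetric (@step n k).
Proof. by move=> u v; apply/idP/idP => /step_sw /sw_sym /step_sw. Qed.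

Definition cls n k (u : k.-tuple 'I_n) := [set v | connect (@step n k) u v].

Lemma c_good n k : c n k = #|[set w : k.-tuple 'I_n | goodw w]|.
Proof.
have hsym := sym_connect_sym (@step_sym n k).
have nft : forall u : k.-tuple 'I_n, exists g : k.-tuple 'I_n, goodw g /\ connect (@step n k) u g.
  move=> u; have [v [hv hc]] := rts_lift (nf_rts u) erefl.
  by exists v; rewrite hv good_nf.
rewrite /c.
have -> : Kclasses n k = (@cls n k) @: [set w : k.-tuple 'I_n | goodw w].
  apply/setP => C; apply/imsetP/imsetP => [[u _ ->]|[g _ ->]].
    have [g [hg hc]] := nft u; exists g; first by rewrite inE.
    by apply/setP => w; rewrite !inE (same_connect hsym hc).
  by exists g.
rewrite card_in_imset // => g1 g2; rewrite !inE => h1 h2 he.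
have : g2 \in cls g1 by rewrite he inE connect0.
rewrite inE => /connect_nf; rewrite !good_fix // => e; exact: val_inj.
Qed.

Lemma sum_tupleS (T : finType) k (F : seq T -> nat) :
  \sum_(t : k.+1.-tuple T) F t = \sum_(b : T) \sum_(t : k.-tuple T) F (b :: t).
Proof.
rewrite pair_bigA /= (reindex (fun p : T * k.-tuple T => cons_tuple p.1 p.2)) /=.
  by [].
apply: onW_bij; exists (fun t : k.+1.-tuple T => (thead t, behead_tuple t)).
  by case=> b t /=; congr (_, _); apply: val_inj.
by move=> t; rewrite [RHS]tuple_eta; apply: val_inj.
Qed.

Definition fcount n k (a : 'I_n) := \sum_(t : k.-tuple 'I_n) (path (@tr n) a t : nat).

Lemma card_good_sum n k : #|[set w : k.-tuple 'I_n | goodw w]| = \sum_(t : k.-tuple 'I_n) (goodw t : nat).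
Proof.
rewrite -sum1_card big_mkcond /=; apply: eq_bigr => t _; rewrite inE.
by case: (goodw t).
Qed.

Lemma c0 n : c n 0 = 1.
Proof.
rewrite c_good card_good_sum (eq_bigr (fun _ => 1)); last by move=> t _; rewrite tuple0.
by rewrite sum1_card card_tuple expn0.
Qed.

Lemma cS n k : c n k.+1 = \sum_(a : 'I_n) fcount k a.
Proof. by rewrite c_good card_good_sum (@sum_tupleS _ k (fun s : seq 'I_n => (goodw s : nat))). Qed.

Lemma fcount0 n (a : 'I_n) : fcount 0 a = 1.
Proof.
rewrite /fcount (eq_bigr (fun _ => 1)); last by move=> t _; rewrite tuple0.
by rewrite sum1_card card_tuple expn0.
Qed.

Lemma fcountS n k (a : 'I_n) : fcount k.+1 a = \sum_b (@tr n a b) * fcount k b.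
Proof.
rewrite /fcount (@sum_tupleS _ k (fun s : seq 'I_n => (path (@tr n) a s : nat))); apply: eq_bigr => b _; rewrite big_distrr /=.
by apply: eq_bigr => t _; rewrite mulnb.
Qed.
Import GRing.Theory.
Local Open Scope ring_scope.

Section Alg.
Lemma horner_mx_sum (m : nat) (M : 'M[int]_m.+1) (p : {poly int}) :
  horner_mx M p = \sum_(i < size p) p`_i *: M ^+ i.
Proof.
rewrite -{1}[p]coefK poly_def rmorph_sum /=; apply: eq_bigr => i _.
by rewrite linearZ /= rmorphXn /= horner_mx_X.
Qed.

Definition Qm (m : nat) (M : 'M[int]_m.+1) (j : nat) : 'M[int]_m.+1 :=
  \sum_(l < m.+1 - j) (char_poly M)`_(j + 1 + l) *: M ^+ l.

Lemma Q_rel (m : nat) (M : 'M[int]_m.+1) (i : nat) :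
  (if (0 < i <= m.+1)%N then Qm M i.-1 else 0) - (if (i < m.+1)%N then M *m Qm M i else 0)
  = ((char_poly M)`_i)%:M.
Proof.
set p := char_poly M.
have sp : size p = m.+2 by rewrite size_char_poly.
have Mq : forall j, M *m Qm M j = \sum_(l < m.+1 - j) p`_(j + 1 + l) *: M ^+ l.+1.
  move=> j; rewrite /Qm mulmx_sumr; apply: eq_bigr => l _.
  by rewrite -scalemxAr mulmxE -exprS.
case: i => [|i].
  rewrite /= sub0r Mq subn0.
  have := Cayley_Hamilton M; rewrite -/p horner_mx_sum sp big_ord_recl expr0 /=.
  move/eqP; rewrite addr_eq0 => /eqP H.
  rewrite (_ : \sum_(l < m.+1) _ = \sum_(i < m.+1) p`_(bump 0 i) *: M ^+ bump 0 i).
    by rewrite -H scalemx1.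
  by apply: eq_bigr => l _; rewrite /bump leq0n add0n !add1n.
rewrite /=.
case: (ltnP i m) => him.
  rewrite ifT; last by rewrite ltnS ltnW.
  rewrite ifT; last by rewrite ltnS.
  rewrite Mq /Qm.
  have -> : (m.+1 - i = (m.+1 - i.+1).+1)%N by lia.
  rewrite big_ord_recl /= expr0 addn0 addn1 scalemx1 -addrA.
  rewrite [X in _ + X](_ : _ = 0) ?addr0 //.
  apply/eqP; rewrite subr_eq0; apply/eqP; apply: eq_bigr => l _.
  have bl : bump 0 l = l.+1 by rewrite /bump leq0n add1n.
  by rewrite bl; congr (_ *: _); congr (_`_ _); lia.
case: (ltnP m i) => hmi.
  rewrite ifF; last by apply/negbTE; lia.
  rewrite ifF; last by apply/negbTE; lia.
  by rewrite subr0 nth_default ?sp //; rewrite raddf0.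
have -> : i = m by lia.
rewrite ifT ?ltnSn // ltnn subr0 /Qm subSnn big_ord1 expr0 scalemx1.
by rewrite addn0 addn1.
Qed.


Definition Pm (m : nat) (M : 'M[int]_m.+1) : 'M[{poly int}]_m.+1 :=
  \matrix_(a, b) \poly_(j < m.+1) (Qm M j a b).

Lemma AP (m : nat) (M : 'M[int]_m.+1) :
  char_poly_mx M *m Pm M = (char_poly M)%:M.
Proof.
apply/matrixP => a b; apply/polyP => i.
have := congr1 (fun A : 'M[int]_m.+1 => A a b) (Q_rel M i).
rewrite /char_poly_mx mulmxBl mul_scalar_mx !mxE coefB coefXM coefMn => <-.
rewrite coef_sum.
congr (_ - _).
  case: i => [|i] /=; first by rewrite mxE.
  by rewrite coef_poly; case: ifP => _; rewrite ?mxE.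
case: ifP => h; rewrite ?mxE.
  by apply: eq_bigr => c _; rewrite !mxE coefCM coef_poly h.
by rewrite big1 // => c _; rewrite !mxE coefCM coef_poly h mulr0.
Qed.

Lemma detlemma (m : nat) (M : 'M[int]_m.+1) :
  (forall a b : 'I_m.+1, (a <= b)%N -> M a b = 1) ->
  char_poly M + \sum_a \sum_b Pm M a b = 'X^(m.+1).
Proof.
move=> hM.
set A := char_poly_mx M; set P := Pm M; set p := char_poly M.
pose U : 'cV[{poly int}]_m.+1 := const_mx 1.
pose Ut : 'rV[{poly int}]_m.+1 := const_mx 1.
have h1 : \det (A + U *m Ut) = 'X^(m.+1).
  have -> : A + U *m Ut = char_poly_mx (M - const_mx 1).
    apply/matrixP => a b; rewrite /A /char_poly_mx !mxE big_ord1 !mxE.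
    rewrite rmorphB /= mulr1 polyC1; ring.
  change (char_poly (M - const_mx 1) = 'X^(m.+1)).
  rewrite char_poly_trig; last first.
    by apply/is_trig_mxP => a b hab; rewrite !mxE hM ?subrr // ltnW.
  rewrite (eq_bigr (fun _ => 'X)); last by move=> a _; rewrite !mxE hM // subrr subr0.
  by rewrite prodr_const card_ord.
pose X := block_mx A U (- Ut) (1 : 'M_1).
have hX : \det X = 'X^(m.+1).
  have -> : X = block_mx (A + U *m Ut) U 0 1 *m block_mx 1 0 (- Ut) (1 : 'M_1).
    by rewrite mulmx_block ?mulmx1 ?mulmx0 ?mul0mx ?mul1mx ?addr0 ?add0r ?mulmxN addrK.

  by rewrite det_mulmx det_ublock det_lblock !det1 !mulr1 h1.
have hAP := AP M.
have hdP : p * \det P = p ^+ m.+1.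
  by rewrite -det_scalar -hAP det_mulmx.
pose G := block_mx P (- (P *m U)) 0 (p%:M : 'M_1).
have hXG : X *m G = block_mx (p%:M) 0 (- (Ut *m P)) (Ut *m P *m U + p%:M).
  by rewrite mulmx_block ?mulmx0 ?addr0 -/A hAP !mulmxN !mulNmx ?opprK !mulmxA hAP ?mul1mx ?mul_scalar_mx ?mul_mx_scalar ?addNr.
have := congr1 determinant hXG.
rewrite det_mulmx det_ublock det_lblock (det_scalar m.+1) hX !det_mx11 !mxE eqxx !mulr1n [\det P * p]mulrC hdP mulrC.
move=> /mulfI.
rewrite expf_neq0 ?monic_neq0 ?char_poly_monic // => /(_ isT) ->.
rewrite addrC; congr (_ + _).
rewrite exchange_big; apply: eq_bigr => b _; rewrite !mxE mulr1; apply: eq_bigr => a _.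
by rewrite !mxE mul1r.
Qed.


Definition cc (m : nat) (M : 'M[int]_m.+1) (l : nat) : int :=
  \sum_a \sum_b (M ^+ l) a b.

Lemma coef_small (m : nat) (M : 'M[int]_m.+1) :
  (forall a b : 'I_m.+1, (a <= b)%N -> M a b = 1) ->
  forall j, (j < m.+1)%N ->
  (char_poly M)`_j + \sum_(l < m.+1 - j) (char_poly M)`_(j + 1 + l) * cc M l = 0.
Proof.
move=> hM j hj.
have := congr1 (fun q : {poly int} => q`_j) (detlemma hM).
rewrite coefXn (ltn_eqF hj) coefD => H; rewrite -[RHS]H; congr (_ + _).
rewrite coef_sum.
rewrite (eq_bigr (fun a => \sum_(l < m.+1 - j) (char_poly M)`_(j + 1 + l) * \sum_b (M ^+ l) a b)).
  rewrite exchange_big; apply: eq_bigr => l _; rewrite /cc mulr_sumr.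
  by apply: eq_bigr => a _.
move=> a _; rewrite coef_sum.
rewrite (eq_bigr (fun b => \sum_(l < m.+1 - j) (char_poly M)`_(j + 1 + l) * (M ^+ l) a b)).
  rewrite exchange_big; apply: eq_bigr => l _; by rewrite mulr_sumr.
move=> b _; rewrite mxE coef_poly hj /Qm summxE; apply: eq_bigr => l _.
by rewrite mxE.
Qed.

Lemma coef_CH (m : nat) (M : 'M[int]_m.+1) (d : nat) :
  \sum_(l < m.+2) (char_poly M)`_l * cc M (l + d) = 0.
Proof.
have := Cayley_Hamilton M; rewrite horner_mx_sum size_char_poly => H.
have H2 : \sum_(l < m.+2) (char_poly M)`_l *: (M ^+ l *m M ^+ d) = 0.
  rewrite (eq_bigr (fun l : 'I_m.+2 => ((char_poly M)`_l *: M ^+ l) *m M ^+ d)); last by move=> l _; rewrite scalemxAl.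
  by rewrite -mulmx_suml H mul0mx.
have H3 : \sum_a \sum_b (\sum_(l < m.+2) (char_poly M)`_l *: (M ^+ l *m M ^+ d)) a b = 0.
  by rewrite H2; apply: big1 => a _; apply: big1 => b _; rewrite mxE.
apply: (etrans _ H3).
rewrite /cc; under eq_bigr => l _ do rewrite mulr_sumr.
rewrite exchange_big; apply: eq_bigr => a _.
under eq_bigr => l _ do rewrite mulr_sumr.
rewrite exchange_big; apply: eq_bigr => b _.
rewrite summxE; apply: eq_bigr => l _.
by rewrite mxE exprD mulmxE.
Qed.

End Alg.

Lemma Mn_entry n (a b : 'I_n) : Mn n a b = (@tr n a b)%:R.
Proof. by rewrite mxE /tr; case: ifP. Qed.

Lemma fcount_int m k (a : 'I_m.+1) : (fcount k a)%:Z = \sum_b ((Mn m.+1) ^+ k) a b.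
Proof.
elim: k a => [|k IH] a.
  rewrite fcount0 expr0 (bigD1 a) //= big1 ?addr0; first by rewrite mxE eqxx.
  by move=> b hb; rewrite mxE eq_sym (negbTE hb).
rewrite fcountS -natz natr_sum.
under eq_bigr => b _ do rewrite natrM [(fcount _ _)%:R]natz IH mulr_sumr.
rewrite exchange_big; apply: eq_bigr => c _.
by rewrite exprS mxE; apply: eq_bigr => b _; rewrite Mn_entry.
Qed.

Lemma cS_int m k : (c m.+1 k.+1)%:Z = cc (Mn m.+1) k.
Proof.
rewrite cS -natz natr_sum /cc; apply: eq_bigr => a _.
by rewrite natz fcount_int.
Qed.

Theorem proposition3 (n : nat) : (3 <= n)%N ->
  forall k : nat,
    \sum_(i < k.+1) ((c n (k - i))%:Z * (Krev n)`_i) = ((k == 0)%N)%:R.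
Proof.
case: n => [//|m] hn k.
pose M := Mn m.+1; pose p := char_poly M.
have hM : forall a b : 'I_m.+1, (a <= b)%N -> M a b = 1.
  by move=> a b h; rewrite /M Mn_entry /tr; have -> : (a.+1 - 1 <= b.+1)%N by lia.
have hK : forall i, (Krev m.+1)`_i = if (i < m.+2)%N then p`_(m.+1 - i) else 0.
  by move=> i; rewrite coef_poly.
have pn : p`_(m.+1) = 1.
  by have := char_poly_monic M; rewrite monicE lead_coefE size_char_poly => /eqP.
case: k => [|k].
  by rewrite big_ord1 subn0 c0 hK subn0 /= pn mulr1.
rewrite /=.
case: (ltnP k m.+1) => hk.
  have := coef_small hM (j := m - k) (leq_ltn_trans (leq_subr k m) (ltnSn m)).
  rewrite (_ : (m.+1 - (m - k) = k.+1)%N); last by lia.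
  rewrite (reindex_inj rev_ord_inj) /= => H.
  rewrite big_ord_recr /= subnn c0 mul1r hK ifT; last by lia.
  rewrite (_ : (m.+1 - k.+1 = m - k)%N) ?subSS //.
  rewrite -[RHS]H addrC; congr (_ + _); apply: eq_bigr => i _.
  rewrite hK ifT; last by have := ltn_ord i; lia.
  rewrite (_ : (k.+1 - i = (k - i).+1)%N); last by have := ltn_ord i; lia.
  rewrite cS_int mulrC subSS.
  congr (_ * _); congr (p`_ _); have := ltn_ord i; lia.
rewrite (bigID (fun i : 'I_k.+2 => (i < m.+2)%N)) /= [X in _ + X]big1 ?addr0; last first.
  by move=> i hi; rewrite hK (negbTE hi) mulr0.
rewrite -(big_ord_widen k.+2 (fun i => (c m.+1 (k.+1 - i))%:Z * (Krev m.+1)`_i)); last by lia.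
have := coef_CH M (k - m.+1).
rewrite (reindex_inj rev_ord_inj) /= => H.
rewrite -[RHS]H; apply: eq_bigr => i _.
have hi := ltn_ord i.
rewrite hK ifT // (_ : (k.+1 - i = (k - i).+1)%N); last by lia.
rewrite cS_int mulrC; congr (_ * _).
  by congr (cc _ _); lia.
Qed.
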